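(* Let $h,m$ be positive integers with $h=1$ or $\omega(m)=1$, and let $c$ be a positive integer such that no $\mathrm{CC}^h[m]$-circuit computes the $n$-ary conjunction $\mathrm{AND}_n$ for any $n>c$. Let $L\subseteq\{0,1\}^*$ be a language recognizable by $\mathrm{CC}^h[m]$-circuits (i.e. for every $n$ some $\mathrm{CC}^h[m]$-circuit with $n$ inputs outputs $1$ exactly on the words of $L$ of length $n$). Then for every $n$ the number of words of length $n$ in $L$ is either $0$ or at least $2^{n-c}$.
   Context: For an integer $m\ge 1$ and $A\subseteq\{0,\dots,m-1\}$, a gate $\mathrm{MOD}_m^A$ takes finitely many Boolean inputs (counted with multiplicity) and outputs $1$ if their sum modulo $m$ lies in $A$, and $0$ otherwise. A $\mathrm{CC}^h[m]$-circuit is a depth-$h$ Boolean circuit all of whose gates are of the form $\mathrm{MOD}_m^A$ ($A$ may vary between gates), with Boolean variable inputs (constants allowed) and multiple wires allowed. $\omega(m)$ is the number of distinct prime divisors of $m$. *)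

(* Defs.v *)
From Stdlib Require List.
From mathcomp Require Import all_boot.
Set Implicit Arguments. Unset Strict Implicit. Unset Printing Implicit Defensive.

(* Circuits are unfolded into formulas (trees), which
   compute exactly the same functions as DAGs of the same depth; multiple
   wires = repetitions in the list of gate inputs. *)

Definition modgate (m : nat) (A : {set 'I_m}) (bs : seq bool) : bool :=
  [exists i in A, nat_of_ord i == (\sum_(b <- bs) (b : nat)) %% m].

Fixpoint CC (m n h : nat) (f : n.-tuple bool -> bool) {struct h} : Prop :=
  match h with
  | 0 => (exists i : 'I_n, forall x, f x = tnth x i)
         \/ (exists b : bool, forall x, f x = b)
  | h'.+1 =>
      @CC m n h' f \/
      exists (A : {set 'I_m}) (gs : seq (n.-tuple bool -> bool)),
        (forall g, List.In g gs -> @CC m n h' g) /\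
        (forall x, f x = modgate A [seq g x | g <- gs])
  end.

Definition ANDn (n : nat) (x : n.-tuple bool) : bool := all id x.

Definition omega (m : nat) : nat := size (primes m).

Definition CC_recognizes (m h : nat) (L : pred (seq bool)) : Prop :=
  forall n, exists f : n.-tuple bool -> bool,
    @CC m n h f /\ forall w : n.-tuple bool, f w = L w.

(* Main.v *)
Require Import Defs.
From mathcomp Require Import all_boot zify.
Set Implicit Arguments. Unset Strict Implicit. Unset Printing Implicit Defensive.

Lemma CC_ext m n h (f g : n.-tuple bool -> bool) :
  (forall x, f x = g x) -> CC m h f -> CC m h g.
Proof.
elim: h f g => [|h IH] f g fg /=.
  case=> [[i Hi]|[b Hb]]; [left; exists i | right; exists b] => x; by rewrite -fg.
case=> [Hf|[A [gs [Hgs Hf]]]]; first by left; exact: IH Hf.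
by right; exists A, gs; split=> // x; rewrite -fg.
Qed.

Lemma CC_lift m n (f : n.-tuple bool -> bool) h : CC m 0 f -> CC m h f.
Proof. by move=> H; elim: h => [|h IH] //=; left. Qed.

Lemma modgate_eq m (A : {set 'I_m}) (bs bs' : seq bool) :
  (\sum_(b <- bs) (b : nat)) %% m = (\sum_(b <- bs') (b : nat)) %% m ->
  modgate A bs = modgate A bs'.
Proof. by rewrite /modgate => ->. Qed.

Lemma sum_nseq k (b : bool) : \sum_(x <- nseq k b) (x : nat) = k * b.
Proof. by elim: k => [|k IH]; rewrite ?big_nil // /= big_cons IH mulSn. Qed.

Lemma In_nseq T k (x y : T) : List.In y (nseq k x) -> y = x.
Proof. by elim: k => [|k IH] //= [->|/IH]. Qed.

Section Proj.
Variables (m n d : nat) (pi : d.-tuple bool -> n.-tuple bool).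
Hypothesis m0 : 0 < m.
Hypothesis Hpi : forall i : 'I_n,
  (exists b, forall y, tnth (pi y) i = b) \/
  (exists j, forall y, tnth (pi y) i = tnth y j) \/
  (exists j, forall y, tnth (pi y) i = ~~ tnth y j).

Lemma CC_proj h (g : n.-tuple bool -> bool) : CC m h g ->
  CC m h (fun y => g (pi y)) \/ exists j, forall y, g (pi y) = ~~ tnth y j.
Proof.
elim: h g => [|h IH] g /=.
  case=> [[i Hi]|[b Hb]]; last by left; right; exists b => y; rewrite Hb.
  case: (Hpi i) => [[b Hb]|[[j Hj]|[j Hj]]].
  - by left; right; exists b => y; rewrite Hi Hb.
  - by left; left; exists j => y; rewrite Hi Hj.
  - by right; exists j => y; rewrite Hi Hj.
case=> [Hg|[A [gs [Hgs Hg]]]].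
  by case: (IH g Hg) => [H|H]; [left; left|right].
have [gs' [Hgs' Hsum]] : exists gs' : seq (d.-tuple bool -> bool),
   (forall g', List.In g' gs' -> CC m h g') /\
   forall y, (\sum_(b <- [seq g (pi y) | g <- gs]) (b : nat)) %% m
           = (\sum_(b <- [seq g' y | g' <- gs']) (b : nat)) %% m.
  elim: gs Hgs {Hg} => [|g0 gs IHl] Hgs; first by exists [::].
  have [|gs' [Hgs' Hsum]] := IHl; first by move=> g1 H; apply: Hgs; right.
  case: (IH g0 (Hgs g0 (or_introl erefl))) => [HC|[j Hj]].
    exists ((fun y => g0 (pi y)) :: gs'); split.
      by move=> g' /= [<-|/Hgs'].
    by move=> y /=; rewrite !big_cons -modnDmr Hsum modnDmr.
  exists ((fun _ => true) :: nseq m.-1 (fun y => tnth y j) ++ gs'); split.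
    move=> g' /= [Hg'|Hin0].
      by rewrite -Hg'; apply: CC_lift; right; exists true.
    case: (List.in_app_or _ _ _ Hin0) => [Hin|]; last exact: Hgs'.
    rewrite (In_nseq Hin).
    by apply: CC_lift; left; exists j.
  move=> y /=; rewrite !big_cons map_cat map_nseq big_cat sum_nseq /=.
  rewrite -modnDmr Hsum modnDmr Hj.
  case: (tnth y j) => /=; last by rewrite muln0.
  by rewrite muln1 addnA add1n prednK // modnDl.
left; right; exists A, gs'; split => // y.
by rewrite Hg; apply: modgate_eq; rewrite Hsum.
Qed.
End Proj.

Lemma comb n k : forall (U : {set 'I_n}) (S : {set n.-tuple bool}),
  #|U| = k -> S != set0 ->
  (forall x y, x \in S -> y \in S -> forall i, i \notin U -> tnth x i = tnth y i) ->
  exists w, exists D : {set 'I_n}, [/\ w \in S, D \subset U,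
    (forall x, x \in S -> (forall i, i \notin D -> tnth x i = tnth w i) -> x = w)
    & 2 ^ #|U| <= 2 ^ #|D| * #|S|].
Proof.
elim: k => [|k IH] U S HU HS Hag.
  have U0 := cards0_eq HU.
  have [w wS] := set0Pn _ HS.
  exists w, set0; split => //; first by rewrite sub0set.
    move=> x xS _; apply: eq_from_tnth => i; apply: Hag => //; by rewrite U0 inE.
  by rewrite HU cards0 mul1n card_gt0.
have [i iU] : exists i, i \in U.
  by apply/set0Pn; rewrite -card_gt0 HU.
have HU' : #|U :\ i| = k by move: HU; rewrite (cardsD1 i) iU add1n => -[].
pose B := [set x : n.-tuple bool | tnth x i].
pose S1 := S :&: B. pose S0 := S :\: B.
have Hcard : #|S1| + #|S0| = #|S| by rewrite cardsID.
have Hag' : forall S' : {set n.-tuple bool}, S' \subset S ->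
   (forall x y, x \in S' -> y \in S' -> tnth x i = tnth y i) ->
   forall x y, x \in S' -> y \in S' -> forall j, j \notin U :\ i -> tnth x j = tnth y j.
  move=> S' sS' Hi x y xS yS j; rewrite !inE negb_and negbK.
  case/orP => [/eqP -> | jU]; first exact: Hi.
  by apply: Hag => //; apply: (subsetP sS').
case: (boolP ((S1 != set0) && (S0 != set0))) => [/andP [S1n S0n]|Hone].
  pose S' := if #|S1| <= #|S0| then S1 else S0.
  have sS' : S' \subset S by rewrite /S'; case: ifP => _; rewrite ?subsetIl ?subsetDl.
  have S'n : S' != set0 by rewrite /S'; case: ifP.
  have c2 : 2 * #|S'| <= #|S| by rewrite -Hcard /S'; case: ifP; lia.
  have memS' : forall x, x \in S' = (x \in S) && (tnth x i == (#|S1| <= #|S0|)).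
    by move=> x; rewrite /S'; case: ifP => _; rewrite !inE; [case: (tnth x i); rewrite ?andbT ?andbF|case: (tnth x i); rewrite ?andbT ?andbF //= andbC].
  have Hi : forall x y, x \in S' -> y \in S' -> tnth x i = tnth y i.
    by move=> x y; rewrite !memS' => /andP [_ /eqP ->] /andP [_ /eqP ->].
  have [w [D [wS' sD Hw Hc]]] := IH _ _ HU' S'n (Hag' _ sS' Hi).
  have iD : i \notin D by apply/negP => /(subsetP sD); rewrite !inE eqxx.
  exists w, D; split.
  - exact: (subsetP sS').
  - by apply: (subset_trans sD); apply: subsetDl.
  - move=> x xS Hx; apply: Hw => //.
    move: wS'; rewrite !memS' xS (Hx _ iD) => /andP [_ ->] //.
  - rewrite HU expnS.
    rewrite HU' in Hc.
    apply: leq_trans (leq_mul (leqnn 2) Hc) _.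
    rewrite mulnCA; apply: leq_mul => //.
have [b Hb] : exists b, forall z, z \in S -> tnth z i = b.
  move: Hone; rewrite negb_and !negbK => /orP [/eqP E|/eqP E].
    exists false => z zS; apply/negP => zi.
    have : z \in S1 by rewrite !inE zS zi.
    by rewrite E inE.
  exists true => z zS; apply/negPn/negP => zi.
  have : z \in S0 by rewrite !inE zS zi.
  by rewrite E inE.
have Hi : forall x y, x \in S -> y \in S -> tnth x i = tnth y i.
  by move=> x y xS yS; rewrite !Hb.
have [w [D [wS sD Hw Hc]]] := IH _ _ HU' HS (Hag' _ (subxx S) Hi).
have iD : i \notin D by apply/negP => /(subsetP sD); rewrite !inE eqxx.
exists w, (i |: D); split => //.
- rewrite subUset sub1set iU /=; apply: (subset_trans sD); apply: subsetDl.
- move=> x xS Hx; apply: Hw => // j jD.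
  case: (eqVneq j i) => [->|ji]; first exact: Hi.
  by apply: Hx; rewrite !inE negb_or ji.
- rewrite HU expnS cardsU1 iD add1n expnS -mulnA.
  by rewrite HU' in Hc; apply: leq_mul.
Qed.

Theorem corollary2p5 (h m c : nat) (L : pred (seq bool)) :
  0 < h -> 0 < m -> (h = 1 \/ omega m = 1) -> 0 < c ->
  (forall n, c < n -> ~ @CC m n h (@ANDn n)) ->
  CC_recognizes m h L ->
  forall n, #|[set w : n.-tuple bool | L w]| = 0
            \/ 2 ^ (n - c) <= #|[set w : n.-tuple bool | L w]|.
Proof.
move=> h0 m0 _ c0 Hand Hrec n.
set S := [set w : n.-tuple bool | L w].
case: (posnP #|S|) => [->|Spos]; [by left|right].
rewrite leqNgt; apply/negP => Hlt.
have [||w [D [wS _ Huniq Hcnt]]] := @comb n _ setT S (erefl _).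
- by rewrite -card_gt0.
- by move=> x y _ _ i; rewrite inE.
rewrite cardsT card_ord in Hcnt.
have cD : c < #|D|.
  case: (leqP n c) => nc.
    by move: Hlt; rewrite (_ : n - c = 0) ?expn0; lia.
  have : 2 ^ n < 2 ^ (#|D| + (n - c)).
    rewrite expnD; apply: (leq_ltn_trans Hcnt).
    by rewrite ltn_mul2l expn_gt0 Hlt.
  rewrite ltn_exp2l //; lia.
have [x0 x0D] : exists x0, x0 \in D by apply/card_gt0P; lia.
pose rk := enum_rank_in x0D.
pose pi (y : #|D|.-tuple bool) : n.-tuple bool :=
  [tuple (if i \in D then (if tnth y (rk i) then tnth w i else ~~ tnth w i)
          else tnth w i) | i < n].
have [f [Hf fL]] := Hrec n.
have key : forall y, f (pi y) = ANDn y.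
  move=> y; rewrite fL /ANDn.
  have -> : L (pi y) = (pi y \in S) by rewrite inE.
  apply/idP/idP.
  - move=> H.
    have E : pi y = w.
      apply: Huniq => // i iD; rewrite tnth_mktuple (negbTE iD) //.
    apply/allP => b /tnthP [j ->].
    have := congr1 (fun t => tnth t (enum_val j)) E.
    rewrite /= tnth_mktuple (enum_valP j) /rk enum_valK_in.
    by case: (tnth y j) => //; case: (tnth w _).
  - move=> H.
    have -> : pi y = w; last exact: wS.
    apply: eq_from_tnth => i; rewrite tnth_mktuple; case: ifP => // iD.
    by rewrite (allP H _ (mem_tnth _ _)).
have Hpi : forall i : 'I_n,
  (exists b, forall y, tnth (pi y) i = b) \/
  (exists j, forall y, tnth (pi y) i = tnth y j) \/
  (exists j, forall y, tnth (pi y) i = ~~ tnth y j).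
  move=> i; case: (boolP (i \in D)) => iD; last first.
    by left; exists (tnth w i) => y; rewrite tnth_mktuple (negbTE iD).
  right; case: (boolP (tnth w i)) => wi; [left|right]; exists (rk i) => y;
    by rewrite tnth_mktuple iD; move: wi; case: (tnth y _); case: (tnth w i).

case: (CC_proj m0 Hpi Hf) => [HC|[j Hj]].
  by apply: (Hand #|D| cD); apply: CC_ext HC.
have := Hj [tuple true | _ < #|D|].
rewrite key tnth_mktuple /ANDn.
have -> : all id [tuple true | _ < #|D|] by apply/allP => b /tnthP [k ->]; rewrite tnth_mktuple.
by [].
Qed.
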